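(* Let $a,b$ be fixed nonzero complex constants, let $\{a_i\},\{b_i\},\{c_i\},\{d_i\}$ ($i\in\mathbb{Z}$) be complex sequences of nonzero numbers, and let $m,n\ge0$ be integers such that for $-n\le j\le m$ the quantities $(1-aa_jc_j)(1-b\frac{a_j}{c_j})$, $(1-aa_jd_j)(1-b\frac{a_j}{d_j})$, $(b_j-c_j)(1-\frac{b}{ab_jc_j})$, $(b_j-d_j)(1-\frac{b}{ab_jd_j})$ are nonzero. Then $$\sum_{k=-n}^{m}(1-aa_kb_k)\Big(1-b\frac{a_k}{b_k}\Big)(c_k-d_k)\Big(1-\frac{b}{ac_kd_k}\Big)\frac{\prod_{j=1}^{k-1}(1-aa_jc_j)(1-b\frac{a_j}{c_j})}{\prod_{j=1}^{k}(1-aa_jd_j)(1-b\frac{a_j}{d_j})}\frac{\prod_{j=1}^{k-1}(b_j-d_j)(1-\frac{b}{ab_jd_j})}{\prod_{j=1}^{k}(b_j-c_j)(1-\frac{b}{ab_jc_j})}$$ $$=\frac{\prod_{j=1}^{m}(1-aa_jc_j)(1-b\frac{a_j}{c_j})}{\prod_{j=1}^{m}(1-aa_jd_j)(1-b\frac{a_j}{d_j})}\frac{\prod_{j=1}^{m}(b_j-d_j)(1-\frac{b}{ab_jd_j})}{\prod_{j=1}^{m}(b_j-c_j)(1-\frac{b}{ab_jc_j})}-\frac{\prod_{j=-n}^{0}(1-aa_jd_j)(1-b\frac{a_j}{d_j})}{\prod_{j=-n}^{0}(1-aa_jc_j)(1-b\frac{a_j}{c_j})}\frac{\prod_{j=-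n}^{0}(b_j-c_j)(1-\frac{b}{ab_jc_j})}{\prod_{j=-n}^{0}(b_j-d_j)(1-\frac{b}{ab_jd_j})}.$$
   Context: Products over integer ranges follow the convention: $\prod_{j=k}^{m}A_j=A_k\cdots A_m$ if $m\ge k$; $=1$ if $m=k-1$; $=(A_{m+1}\cdots A_{k-1})^{-1}$ if $m\le k-2$. The constants $a,b$ are distinct objects from the sequences $a_k,b_k$. *)

(* Defs.v *)
From HB Require Import structures.
From mathcomp Require Import all_boot all_order all_algebra.
From mathcomp Require Import reals.
From mathcomp.real_closed Require Export complex.
Set Implicit Arguments. Unset Strict Implicit. Unset Printing Implicit Defensive.
Import Order.TTheory GRing.Theory Num.Theory.
Local Open Scope ring_scope.

(* Product over an integer range with the paper's convention:
   prodZ A k m = A k * ... * A m                if m >= k,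
               = 1                              if m = k - 1,
               = (A (m+1) * ... * A (k-1))^-1   if m <= k - 2. *)
Definition prodZ (F : fieldType) (A : int -> F) (k m : int) : F :=
  if (k <= m)%R then \prod_(0 <= i < absz (m - k + 1)%R) A (k + i%:Z)%R
  else if m == k - 1 then 1
  else (\prod_(0 <= i < absz (k - 1 - m)%R) A (m + 1 + i%:Z)%R)^-1.

Definition sumZ (F : fieldType) (A : int -> F) (lo hi : int) : F :=
  \sum_(0 <= i < absz (hi - lo + 1)%R) A (lo + i%:Z)%R.

(* Main.v *)
Require Import Defs.
From HB Require Import structures.
From mathcomp Require Import all_boot all_order all_algebra.
From mathcomp Require Import reals.
From mathcomp.real_closed Require Import complex.
From mathcomp Require Import ring lra zify.
Import Order.TTheory GRing.Theory Num.Theory.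
Local Open Scope ring_scope.

Lemma prodZ_pos (F : fieldType) (A : int -> F) (n : nat) :
  prodZ A 1 n%:Z = \prod_(0 <= i < n) A (1 + i%:Z).
Proof.
rewrite /prodZ; case: n => [|n] /=.
  by rewrite big_geq.
by have -> : (n.+1 - 1 + 1 = n.+1)%N by lia.
Qed.

Lemma prodZ_neg (F : fieldType) (A : int -> F) (n : nat) :
  prodZ A 1 (- n%:Z) = (\prod_(0 <= i < n) A (- n%:Z + 1 + i%:Z))^-1.
Proof.
rewrite /prodZ; case: n => [|n].
  by rewrite /= big_geq // invr1.
have h1 : (1 <= - (n.+1)%:Z :> int) = false by lia.
rewrite h1.
have h2 : (- (n.+1)%:Z == 1 - 1 :> int) = false by lia.
rewrite h2.
have -> : (1 - 1 - - (n.+1)%:Z :> int) = n.+1 by lia.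
by [].
Qed.

Lemma prodZS (F : fieldType) (A : int -> F) (k : int) :
  A k != 0 -> prodZ A 1 k = prodZ A 1 (k - 1) * A k.
Proof.
case: k => [[|n]|n] Ak.
- have -> : (Posz 0 - 1 = - (1%:Z)) by [].
  rewrite prodZ_pos prodZ_neg big_geq // big_nat1.
  have -> : (- 1%:Z + 1 + 0%:Z = Posz 0) by [].
  by rewrite mulVf.
- have -> : (Posz n.+1 - 1 = n%:Z) by lia.
  by rewrite !prodZ_pos big_nat_recr //=.
- rewrite NegzE.
  have -> : (- (n.+1)%:Z - 1 = - (n.+2)%:Z) by lia.
  rewrite !prodZ_neg [in RHS]big_nat_recl // invfM.
  have -> : (- (n.+2)%:Z + 1 + 0%:Z = - (n.+1)%:Z) by lia.
  rewrite -NegzE mulrAC mulVf // mul1r.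
  congr (_ ^-1); apply: eq_bigr => i _; congr (A _); lia.
Qed.

Lemma telesc (F : fieldType) (f T : int -> F) (lo : int) (N : nat) :
  (forall i : nat, (i < N)%N -> f (lo + i%:Z) = T (lo + i%:Z) - T (lo + i%:Z - 1)) ->
  \sum_(0 <= i < N) f (lo + i%:Z) = T (lo + N%:Z - 1) - T (lo - 1).
Proof.
elim: N => [|N IH] H.
  by rewrite big_geq // addr0 subrr.
rewrite big_nat_recr //= IH; last by move=> i iN; apply: H; lia.
rewrite H //.
have -> : lo + (N.+1)%:Z - 1 = lo + N%:Z by lia.
by rewrite addrC addrA addrNK.
Qed.

Lemma telescZ (F : fieldType) (f T : int -> F) (lo hi : int) :
  lo <= hi + 1 ->
  (forall k, lo <= k <= hi -> f k = T k - T (k - 1)) ->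
  sumZ f lo hi = T hi - T (lo - 1).
Proof.
move=> hle H; rewrite /sumZ (@telesc _ f T).
  congr (T _ - _); lia.
move=> i iN; apply: H; lia.
Qed.

Lemma step (F : fieldType) (K PCk PDk QCk QDk p1 p2 p3 p4 : F) :
  PDk != 0 -> QCk != 0 -> K = PCk * QDk - PDk * QCk ->
  K * (p1 / (p2 * PDk)) * (p3 / (p4 * QCk))
  = p1 * PCk / (p2 * PDk) * (p3 * QDk / (p4 * QCk)) - p1 / p2 * (p3 / p4).
Proof.
move=> h1 h2 ->; rewrite !invfM; set u := p2^-1; set v := p4^-1.
by field; apply/andP.
Qed.

Lemma key (F : fieldType) (a b x y c d : F) : a != 0 -> y != 0 -> c != 0 -> d != 0 ->
  (1 - a * x * y) * (1 - b * (x / y)) * (c - d) * (1 - b / (a * c * d))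
  = (1 - a * x * c) * (1 - b * (x / c)) * ((y - d) * (1 - b / (a * y * d)))
  - (1 - a * x * d) * (1 - b * (x / d)) * ((y - c) * (1 - b / (a * y * c))).
Proof. by move=> *; field; apply/and4P. Qed.

Local Open Scope complex_scope.

Theorem corollary3p5 (R : realType) (a b : R[i])
  (as_ bs cs ds : int -> R[i]) (m n : nat) :
  a != 0 -> b != 0 ->
  (forall i, as_ i != 0) -> (forall i, bs i != 0) ->
  (forall i, cs i != 0) -> (forall i, ds i != 0) ->
  (forall j : int, - (n%:Z) <= j <= m%:Z ->
     [/\ (1 - a * as_ j * cs j) * (1 - b * (as_ j / cs j)) != 0,
         (1 - a * as_ j * ds j) * (1 - b * (as_ j / ds j)) != 0,
         (bs j - cs j) * (1 - b / (a * bs j * cs j)) != 0 &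
         (bs j - ds j) * (1 - b / (a * bs j * ds j)) != 0]) ->
  let PC := fun j => (1 - a * as_ j * cs j) * (1 - b * (as_ j / cs j)) in
  let PD := fun j => (1 - a * as_ j * ds j) * (1 - b * (as_ j / ds j)) in
  let QC := fun j => (bs j - cs j) * (1 - b / (a * bs j * cs j)) in
  let QD := fun j => (bs j - ds j) * (1 - b / (a * bs j * ds j)) in
  sumZ (fun k =>
          (1 - a * as_ k * bs k) * (1 - b * (as_ k / bs k))
          * (cs k - ds k) * (1 - b / (a * cs k * ds k))
          * (prodZ PC 1 (k - 1) / prodZ PD 1 k)
          * (prodZ QD 1 (k - 1) / prodZ QC 1 k))
       (- (n%:Z)) (m%:Z)
  = (prodZ PC 1 m%:Z / prodZ PD 1 m%:Z) * (prodZ QD 1 m%:Z / prodZ QC 1 m%:Z)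
    - (prodZ PD (- (n%:Z)) 0 / prodZ PC (- (n%:Z)) 0)
      * (prodZ QC (- (n%:Z)) 0 / prodZ QD (- (n%:Z)) 0).
Proof.
move=> a0 b0 as0 bs0 cs0 ds0 Hne PC PD QC QD.
pose T := fun k => prodZ PC 1 k / prodZ PD 1 k * (prodZ QD 1 k / prodZ QC 1 k).
rewrite (@telescZ _ _ T); first last.
- move=> k hk.
  have [h1 h2 h3 h4] : [/\ PC k != 0, PD k != 0, QC k != 0 & QD k != 0].
    by apply: Hne; lia.
  rewrite /T (@prodZS _ PC k h1) (@prodZS _ PD k h2) (@prodZS _ QC k h3) (@prodZS _ QD k h4).
  apply: step => //.
  by rewrite key.
- lia.
congr (_ - _).
have -> : - n%:Z - 1 = - (n.+1)%:Z by lia.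
rewrite /T !prodZ_neg.
have E : forall A : int -> R[i], prodZ A (- n%:Z) 0 =
    \prod_(0 <= i < n.+1) A (- (n.+1)%:Z + 1 + i%:Z).
  move=> A; rewrite /prodZ ifT; last by lia.
  have -> : `|(0 - - n%:Z + 1)%R|%N = n.+1 by lia.
  by apply: eq_bigr => i _; congr (A _); lia.
rewrite !E.
by rewrite !invrK; congr (_ * _); rewrite mulrC.
Qed.
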